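(* Suppose that $\|\mathcal{P}_{T_i}\mathcal{A}_{i,p}^*\mathcal{A}_{i,p}\boldsymbol{S}_{i,p}\mathcal{P}_{T_i}-\mathcal{P}_{T_i}\|\le\frac14$ for all $1\le i\le r$, $1\le p\le P$, and $\|\mathcal{P}_{T_j}\mathcal{A}_{j,p}^*\mathcal{A}_{k,p}\boldsymbol{S}_{k,p}\mathcal{P}_{T_k}\|\le\frac1{4r}$ for all $1\le j\ne k\le r$, $1\le p\le P$. Then the golfing scheme defined in the context generates a sequence $\{\boldsymbol{Y}_{i,p}\}_{p=1}^P$ such that $$\|\boldsymbol{W}_{i,p}\|_F=\|\mathcal{P}_{T_i}(\boldsymbol{Y}_{i,p})-\boldsymbol{h}_i\boldsymbol{x}_i^*\|_F\le2^{-p}$$ holds simultaneously for all $1\le i\le r$ (and $1\le p\le P$). In particular, if $P\ge\log_2(5r\gamma)$, then $\|\mathcal{P}_{T_i}(\boldsymbol{Y}_i)-\boldsymbol{h}_i\boldsymbol{x}_i^*\|_F\le\frac1{5r\gamma}$, where $\boldsymbol{Y}_i:=\boldsymbol{Y}_{i,P}$.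
   Context: $\boldsymbol{h}_i\in\mathbb{R}^{K_i}$, $\boldsymbol{x}_i\in\mathbb{R}^{N_i}$ real unit-norm (standing assumption); $\boldsymbol{b}_{i,l}\in\mathbb{C}^{K_i}$, $\boldsymbol{a}_{i,l}\in\mathbb{R}^{N_i}$ given vectors. Partition $\{\Gamma_p\}_{p=1}^P$ of $\{1,\dots,L\}$ with $|\Gamma_p|=Q$; $\boldsymbol{T}_{i,p}=\sum_{l\in\Gamma_p}\boldsymbol{b}_{i,l}\boldsymbol{b}_{i,l}^*$ invertible, $\boldsymbol{S}_{i,p}=\boldsymbol{T}_{i,p}^{-1}$ (acting as $\boldsymbol{Z}\mapsto\boldsymbol{S}_{i,p}\boldsymbol{Z}$). $\mathcal{A}_{i,p}(\boldsymbol{Z})=\{\boldsymbol{b}_{i,l}^*\boldsymbol{Z}\boldsymbol{a}_{i,l}\}_{l\in\Gamma_p}$, $\mathcal{A}_{i,p}^*(\boldsymbol{z})=\sum_{l\in\Gamma_p}z_l\boldsymbol{b}_{i,l}\boldsymbol{a}_{i,l}^*$; $\mathcal{P}_{T_i}(\boldsymbol{Z})=\boldsymbol{h}_i\boldsymbol{h}_i^*\boldsymbol{Z}+(\boldsymbol{I}-\boldsymbol{h}_i\boldsymbol{h}_i^* )\boldsymbol{Z}\boldsymbol{x}_i\boldsymbol{x}_i^*$. Operator norms w.r.t. Frobenius norms. $\gamma>0$ is an upper bound on the operator norms $\|\mathcal{A}_i\|$ of $\mathcal{A}_i(\boldsymbol{Z})=\{\boldsymbol{b}_{i,l}^*\boldsymbol{Z}\boldsymbol{a}_{i,l}\}_{l=1}^L$.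 Golfing scheme: $\boldsymbol{Y}_{i,0}=\boldsymbol{0}$; for $p=1,\dots,P$: $\boldsymbol{\lambda}_{p-1}:=\sum_{j=1}^r\mathcal{A}_{j,p}\big(\boldsymbol{S}_{j,p}(\boldsymbol{h}_j\boldsymbol{x}_j^*-\mathcal{P}_{T_j}(\boldsymbol{Y}_{j,p-1}))\big)$ and $\boldsymbol{Y}_{i,p}:=\boldsymbol{Y}_{i,p-1}+\mathcal{A}_{i,p}^*(\boldsymbol{\lambda}_{p-1})$; $\boldsymbol{W}_{i,p}:=\boldsymbol{h}_i\boldsymbol{x}_i^*-\mathcal{P}_{T_i}(\boldsymbol{Y}_{i,p})$. *)

(* Defs.v *)
From HB Require Import structures.
From mathcomp Require Import all_boot all_order all_algebra.
From mathcomp Require Import all_classical all_reals all_analysis.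
From mathcomp Require Import complex.
Set Implicit Arguments. Unset Strict Implicit. Unset Printing Implicit Defensive.
Import Order.TTheory GRing.Theory Num.Theory.
Local Open Scope ring_scope.

Section Golfing.
Variable R : realType.
Local Notation C := (R[i]).

Definition fnorm m n (Z : 'M[C]_(m, n)) : R :=
  Num.sqrt (\sum_(k < m) \sum_(l < n) (Normc.normc (Z k l)) ^+ 2).

(* ||f|| <= c for the operator norm induced by the Frobenius norms
   (unfolding of the definition of the operator norm). *)
Definition opnorm_le m n m' n' (f : 'M[C]_(m, n) -> 'M[C]_(m', n')) (c : R) : Prop :=
  forall Z, fnorm (f Z) <= c * fnorm Z.

Definition cplx m n (v : 'M[R]_(m, n)) : 'M[C]_(m, n) :=
  map_mx (fun t => (t%:C)%C) v.

Definition adj m n (M : 'M[C]_(m, n)) : 'M[C]_(n, m) :=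
  (map_mx (fun z => (z^*)%C) M)^T.

Definition unit_vec n (v : 'cV[R]_n) : Prop := \sum_(k < n) v k 0 ^+ 2 = 1.

Definition PT K N (h : 'cV[R]_K) (x : 'cV[R]_N) (Z : 'M[C]_(K, N)) : 'M[C]_(K, N) :=
  cplx (h *m h^T) *m Z + (1%:M - cplx (h *m h^T)) *m Z *m cplx (x *m x^T).

Definition meas K N (b : 'cV[C]_K) (a : 'cV[R]_N) (Z : 'M[C]_(K, N)) : C :=
  (adj b *m Z *m cplx a) 0 0.

(* A_{i,p}(Z), as a vector of C^L supported on Gamma (C^Gamma extended by 0) *)
Definition Aop L K N (G : {set 'I_L}) (b : 'I_L -> 'cV[C]_K) (a : 'I_L -> 'cV[R]_N)
  (Z : 'M[C]_(K, N)) : 'rV[C]_L :=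
  \row_l (if l \in G then meas (b l) (a l) Z else 0).

Definition Afull L K N (b : 'I_L -> 'cV[C]_K) (a : 'I_L -> 'cV[R]_N)
  (Z : 'M[C]_(K, N)) : 'rV[C]_L :=
  \row_l meas (b l) (a l) Z.

Definition Aadj L K N (G : {set 'I_L}) (b : 'I_L -> 'cV[C]_K) (a : 'I_L -> 'cV[R]_N)
  (z : 'rV[C]_L) : 'M[C]_(K, N) :=
  \sum_(l in G) z 0 l *: (b l *m adj (cplx (a l))).

Definition Tmat L K (G : {set 'I_L}) (b : 'I_L -> 'cV[C]_K) : 'M[C]_K :=
  \sum_(l in G) b l *m adj (b l).

Definition Smat L K (G : {set 'I_L}) (b : 'I_L -> 'cV[C]_K) : 'M[C]_K :=
  invmx (Tmat G b).

(* The golfing scheme: Y p i = Y_{i,p}, with Gamma indexed by p = 1..P. *)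
Fixpoint golfY r L (K N : 'I_r -> nat) (h : forall i, 'cV[R]_(K i))
  (x : forall i, 'cV[R]_(N i)) (b : forall i, 'I_L -> 'cV[C]_(K i))
  (a : forall i, 'I_L -> 'cV[R]_(N i)) (Gam : nat -> {set 'I_L}) (p : nat)
  : forall i : 'I_r, 'M[C]_(K i, N i) :=
  match p with
  | 0 => fun i => 0
  | q.+1 =>
    let Yq := golfY h x b a Gam q in
    let lam : 'rV[C]_L :=
      \sum_(j < r) Aop (Gam q.+1) (b j) (a j)
         (Smat (Gam q.+1) (b j) *m (cplx (h j *m (x j)^T) - PT (h j) (x j) (Yq j))) in
    fun i => Yq i + Aadj (Gam q.+1) (b i) (a i) lam
  end.

Definition golfW r L (K N : 'I_r -> nat) (h : forall i, 'cV[R]_(K i))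
  (x : forall i, 'cV[R]_(N i)) (b : forall i, 'I_L -> 'cV[C]_(K i))
  (a : forall i, 'I_L -> 'cV[R]_(N i)) (Gam : nat -> {set 'I_L}) (p : nat)
  (i : 'I_r) : 'M[C]_(K i, N i) :=
  cplx (h i *m (x i)^T) - PT (h i) (x i) (golfY h x b a Gam p i).

End Golfing.

(* Main.v *)
Require Import Defs.
From HB Require Import structures.
From mathcomp Require Import all_boot all_order all_algebra.
From mathcomp Require Import all_classical all_reals all_analysis.
From mathcomp Require Import complex.
From mathcomp Require Import ring lra.
Import Order.TTheory GRing.Theory Num.Theory.
Local Open Scope ring_scope.

Section Helpers.
Variable R : realType.

Lemma CS_le (I : finType) (u v : I -> R) :
  \sum_i u i * v i <= Num.sqrt (\sum_i u i ^+ 2) * Num.sqrt (\sum_i v i ^+ 2).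
Proof.
set a := Num.sqrt _; set c := Num.sqrt _.
have Au : \sum_i u i ^+ 2 = a ^+ 2 by rewrite sqr_sqrtr // sumr_ge0 // => i _; exact: sqr_ge0.
have Av : \sum_i v i ^+ 2 = c ^+ 2 by rewrite sqr_sqrtr // sumr_ge0 // => i _; exact: sqr_ge0.
have a0 : 0 <= a by exact: sqrtr_ge0.
have c0 : 0 <= c by exact: sqrtr_ge0.
have [az|anz] := eqVneq a 0.
  have u0 i : u i = 0.
    apply/eqP; rewrite -sqrf_eq0; apply/eqP.
    by apply: (psumr_eq0P (P := xpredT) (fun i _ => sqr_ge0 (u i))) => //; rewrite Au az expr0n.
  by rewrite big1 ?az ?mul0r // => i _; rewrite u0 mul0r.
have [cz|cnz] := eqVneq c 0.
  have v0 i : v i = 0.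
    apply/eqP; rewrite -sqrf_eq0; apply/eqP.
    by apply: (psumr_eq0P (P := xpredT) (fun i _ => sqr_ge0 (v i))) => //; rewrite Av cz expr0n.
  by rewrite big1 ?cz ?mulr0 // => i _; rewrite v0 mulr0.
have key : \sum_i (2 * a * c) * (u i * v i) <= \sum_i (u i ^+ 2 * c ^+ 2 + v i ^+ 2 * a ^+ 2).
  apply: ler_sum => i _.
  have := sqr_ge0 (u i * c - v i * a); nra.
rewrite -mulr_sumr big_split /= -!mulr_suml Au Av in key.
have ap : 0 < a by rewrite lt_def anz.
have cp : 0 < c by rewrite lt_def cnz.
have acp : 0 < 2 * a * c by rewrite !mulr_gt0.
rewrite -(ler_pM2l acp); apply: (le_trans key).
rewrite le_eqVlt; apply/orP; left; apply/eqP; ring.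
Qed.

Lemma mink (I : finType) (w u v : I -> R) :
  (forall i, 0 <= w i) -> (forall i, w i <= u i + v i) ->
  Num.sqrt (\sum_i w i ^+ 2) <= Num.sqrt (\sum_i u i ^+ 2) + Num.sqrt (\sum_i v i ^+ 2).
Proof.
move=> w0 wuv.
set a := Num.sqrt (\sum_i u i ^+ 2); set c := Num.sqrt (\sum_i v i ^+ 2).
have Au : \sum_i u i ^+ 2 = a ^+ 2 by rewrite sqr_sqrtr // sumr_ge0 // => i _; exact: sqr_ge0.
have Av : \sum_i v i ^+ 2 = c ^+ 2 by rewrite sqr_sqrtr // sumr_ge0 // => i _; exact: sqr_ge0.
have a0 : 0 <= a by exact: sqrtr_ge0.
have c0 : 0 <= c by exact: sqrtr_ge0.
have -> : a + c = Num.sqrt ((a + c) ^+ 2) by rewrite sqrtr_sqr ger0_norm // addr_ge0.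
rewrite ler_sqrt ?sqr_ge0 //.
apply: (le_trans (y := \sum_i (u i ^+ 2 + 2 * (u i * v i) + v i ^+ 2))).
  apply: ler_sum => i _.
  have h1 := w0 i; have h2 := wuv i.
  have -> : u i ^+ 2 + 2 * (u i * v i) + v i ^+ 2 = (u i + v i) ^+ 2 by ring.
  by rewrite ler_sqr //; exact: le_trans h1 h2.
rewrite !big_split /= -mulr_sumr Au Av.
have := CS_le _ u v; rewrite -/a -/c => hcs.
have -> : (a + c) ^+ 2 = a ^+ 2 + 2 * (a * c) + c ^+ 2 by ring.
by rewrite lerD2r lerD2l ler_pM2l.
Qed.

End Helpers.

Section Helpers2.
Variable R : realType.
Local Notation C := (R[i]).

Lemma normc_ge0' (z : C) : 0 <= Normc.normc z.
Proof. by case: z => a b; exact: sqrtr_ge0. Qed.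

Lemma fnorm_ge0 m n (A : 'M[C]_(m, n)) : 0 <= fnorm A.
Proof. exact: sqrtr_ge0. Qed.

Lemma fnormD m n (A B : 'M[C]_(m, n)) : fnorm (A + B) <= fnorm A + fnorm B.
Proof.
rewrite /fnorm !(pair_bigA _ (fun k l => Normc.normc (_ k l) ^+ 2)) /=.
apply: (@mink R _ (fun p : 'I_m * 'I_n => Normc.normc ((A + B) p.1 p.2))
             (fun p => Normc.normc (A p.1 p.2)) (fun p => Normc.normc (B p.1 p.2))).
  by move=> p; exact: normc_ge0'.
by move=> p; rewrite mxE; exact: le_normcD.
Qed.

Lemma fnormN m n (A : 'M[C]_(m, n)) : fnorm (- A) = fnorm A.
Proof.
rewrite /fnorm; congr Num.sqrt; apply: eq_bigr => k _; apply: eq_bigr => l _.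
by rewrite mxE normcN.
Qed.

Lemma fnorm0 m n : fnorm (0 : 'M[C]_(m, n)) = 0.
Proof.
rewrite /fnorm big1 ?sqrtr0 // => k _; rewrite big1 // => l _.
by rewrite mxE Normc.normc0 expr0n.
Qed.

Lemma fnorm_sum m n (I : finType) (P : pred I) (F : I -> 'M[C]_(m, n)) :
  fnorm (\sum_(j | P j) F j) <= \sum_(j | P j) fnorm (F j).
Proof.
elim/big_rec2: _ => [|j y Z _ hZ]; first by rewrite fnorm0.
by apply: (le_trans (fnormD _ _ _ _)); rewrite lerD2l.
Qed.

End Helpers2.
Set Implicit Arguments. Unset Strict Implicit.

Section Helpers3.
Variable R : realType.
Local Notation C := (R[i]).

Lemma cplxM m n p (A : 'M[R]_(m, n)) (B : 'M[R]_(n, p)) :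
  cplx (A *m B) = cplx A *m cplx B.
Proof. exact: map_mxM. Qed.

Lemma cplx1 n : cplx (1%:M : 'M[R]_n) = 1%:M.
Proof. exact: map_mx1. Qed.

Lemma hTh n (h : 'cV[R]_n) : unit_vec h -> h^T *m h = 1%:M.
Proof.
move=> hu; apply/matrixP => i j; rewrite !ord1 !mxE /= -hu.
by apply: eq_bigr => k _; rewrite mxE expr2.
Qed.

Lemma Hidem n (h : 'cV[R]_n) : unit_vec h ->
  cplx (h *m h^T) *m cplx (h *m h^T) = cplx (h *m h^T).
Proof.
by move=> hu; rewrite -cplxM mulmxA -(mulmxA h) hTh // mulmx1.
Qed.

Lemma PTD K N (h : 'cV[R]_K) (x : 'cV[R]_N) (A B : 'M[C]_(K, N)) :
  PT h x (A + B) = PT h x A + PT h x B.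
Proof. by rewrite /PT !mulmxDr !mulmxDl addrACA. Qed.

Lemma PT0 K N (h : 'cV[R]_K) (x : 'cV[R]_N) : PT h x 0 = 0.
Proof. by rewrite /PT !mulmx0 mul0mx addr0. Qed.

Lemma PTN K N (h : 'cV[R]_K) (x : 'cV[R]_N) (A : 'M[C]_(K, N)) :
  PT h x (- A) = - PT h x A.
Proof. by rewrite /PT !mulmxN mulNmx opprD. Qed.

Lemma PTB K N (h : 'cV[R]_K) (x : 'cV[R]_N) (A B : 'M[C]_(K, N)) :
  PT h x (A - B) = PT h x A - PT h x B.
Proof. by rewrite PTD PTN. Qed.

Lemma PT_sum K N (h : 'cV[R]_K) (x : 'cV[R]_N) (I : finType) (P : pred I) F :
  PT h x (\sum_(j | P j) F j) = \sum_(j | P j) PT h x (F j).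
Proof. exact: (big_morph _ (PTD h x) (PT0 h x)). Qed.

Lemma gen_idem K N (H D : 'M[C]_K) (X : 'M[C]_N) (Z : 'M[C]_(K, N)) :
  H *m H = H -> H *m D = 0 -> D *m H = 0 -> D *m D = D -> X *m X = X ->
  H *m (H *m Z + D *m Z *m X) + D *m (H *m Z + D *m Z *m X) *m X = H *m Z + D *m Z *m X.
Proof.
move=> HH H1 H2 H3 XX.
rewrite !mulmxDr !mulmxDl !mulmxA HH H1 H2 H3 !mul0mx addr0 add0r.
by rewrite -(mulmxA _ X X) XX.
Qed.

Lemma PT_idem K N (h : 'cV[R]_K) (x : 'cV[R]_N) (Z : 'M[C]_(K, N)) :
  unit_vec h -> unit_vec x -> PT h x (PT h x Z) = PT h x Z.
Proof.
move=> hu xu; rewrite /PT.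
set H := cplx (h *m h^T); set X := cplx (x *m x^T).
have HH : H *m H = H by exact: Hidem.
have XX : X *m X = X by exact: Hidem.
have H1 : H *m (1%:M - H) = 0 by rewrite mulmxBr mulmx1 HH subrr.
have H2 : (1%:M - H) *m H = 0 by rewrite mulmxBl mul1mx HH subrr.
have H3 : (1%:M - H) *m (1%:M - H) = 1%:M - H by rewrite mulmxBr mulmx1 H2 subr0.
exact: gen_idem.
Qed.

Lemma PT_hx K N (h : 'cV[R]_K) (x : 'cV[R]_N) :
  unit_vec h -> unit_vec x -> PT h x (cplx (h *m x^T)) = cplx (h *m x^T).
Proof.
move=> hu xu; rewrite /PT -!cplxM.
have e1 : h *m h^T *m (h *m x^T) = h *m x^T
  by rewrite mulmxA -(mulmxA h) hTh // mulmx1.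
have e2 : h *m x^T *m (x *m x^T) = h *m x^T
  by rewrite -mulmxA (mulmxA x^T) hTh // mul1mx.
by rewrite e1 -mulmxA -cplxM e2 mulmxBl mul1mx -cplxM e1 subrr addr0.
Qed.

Lemma PT_W K N (h : 'cV[R]_K) (x : 'cV[R]_N) (Y : 'M[C]_(K, N)) :
  unit_vec h -> unit_vec x ->
  PT h x (cplx (h *m x^T) - PT h x Y) = cplx (h *m x^T) - PT h x Y.
Proof. by move=> hu xu; rewrite PTB PT_hx // PT_idem. Qed.

Lemma Aadj_sum L K N (G : {set 'I_L}) (b : 'I_L -> 'cV[C]_K) (a : 'I_L -> 'cV[R]_N)
  (I : finType) (v : I -> 'rV[C]_L) :
  Aadj G b a (\sum_j v j) = \sum_j Aadj G b a (v j).
Proof.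
rewrite /Aadj; under eq_bigr do rewrite summxE scaler_suml.
exact: exchange_big.
Qed.

Lemma fnorm_hx K N (h : 'cV[R]_K) (x : 'cV[R]_N) :
  unit_vec h -> unit_vec x -> fnorm (cplx (h *m x^T)) = 1.
Proof.
move=> hu xu; rewrite /fnorm -sqrtr1; congr Num.sqrt.
transitivity (\sum_(k < K) \sum_(l < N) (h k 0 ^+ 2 * x l 0 ^+ 2)).
  apply: eq_bigr => k _; apply: eq_bigr => l _.
  rewrite !mxE big_ord1 mxE /= /Normc.normc /= expr0n addr0 sqr_sqrtr ?sqr_ge0 //.
  by rewrite exprMn.
rewrite -hu; apply: eq_bigr => k _; by rewrite -mulr_sumr xu mulr1.
Qed.

End Helpers3.

Lemma oppr_aux (V : zmodType) (w y s : V) : w - (y + s) = - ((y - w) + s).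
Proof. by rewrite !opprD opprK addrA (addrC w). Qed.

Lemma sum_const_ord (V : pzRingType) r (c : V) : \sum_(j < r) c = c *+ r.
Proof. by rewrite sumr_const card_ord. Qed.

Theorem lemma5 (R : realType) (r L P Q : nat) (K N : 'I_r -> nat)
  (h : forall i, 'cV[R]_(K i)) (x : forall i, 'cV[R]_(N i))
  (b : forall i, 'I_L -> 'cV[R[i]]_(K i)) (a : forall i, 'I_L -> 'cV[R]_(N i))
  (Gam : nat -> {set 'I_L}) (gamma : R) :
  (forall i, unit_vec (h i)) ->
  (forall i, unit_vec (x i)) ->
  (* {Gamma_p}_{p=1}^P is a partition of {1..L} with |Gamma_p| = Q *)
  (forall p, (1 <= p <= P)%N -> #|Gam p| = Q) ->
  (forall l, exists p, (1 <= p <= P)%N /\ l \in Gam p) ->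
  (forall p q, (1 <= p <= P)%N -> (1 <= q <= P)%N -> p <> q -> [disjoint Gam p & Gam q]) ->
  (* T_{i,p} invertible *)
  (forall i p, (1 <= p <= P)%N -> Tmat (Gam p) (b i) \in unitmx) ->
  (* gamma > 0 bounds ||A_i|| *)
  0 < gamma ->
  (forall i, opnorm_le (Afull (b i) (a i)) gamma) ->
  (* hypotheses of the lemma *)
  (forall i p, (1 <= p <= P)%N ->
     opnorm_le (fun Z => PT (h i) (x i) (Aadj (Gam p) (b i) (a i)
                  (Aop (Gam p) (b i) (a i) (Smat (Gam p) (b i) *m PT (h i) (x i) Z)))
                 - PT (h i) (x i) Z) (1 / 4)) ->
  (forall j k p, j != k -> (1 <= p <= P)%N ->
     opnorm_le (fun Z => PT (h j) (x j) (Aadj (Gam p) (b j) (a j)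
                  (Aop (Gam p) (b k) (a k) (Smat (Gam p) (b k) *m PT (h k) (x k) Z))))
               (1 / (4 * r%:R))) ->
  (forall i p, (1 <= p <= P)%N -> fnorm (golfW h x b a Gam p i) <= 2%:R ^- p)
  /\
  (ln (5 * r%:R * gamma) / ln 2 <= P%:R ->
     forall i, fnorm (PT (h i) (x i) (golfY h x b a Gam P i) - cplx (h i *m (x i)^T))
               <= 1 / (5 * r%:R * gamma)).
Proof.
move=> hu xu _ _ _ _ gpos _ Hii Hjk.
have main : forall p, (p <= P)%N -> forall i, fnorm (golfW h x b a Gam p i) <= 2%:R ^- p.
  elim=> [|q IH] Hq i.
    by rewrite /golfW /= PT0 subr0 fnorm_hx // expr0 invr1.
  have Hp : (1 <= q.+1 <= P)%N by rewrite Hq.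
  have IH' := IH (ltnW Hq).
  have PTW j : PT (h j) (x j) (golfW h x b a Gam q j) = golfW h x b a Gam q j.
    exact: PT_W.
  have step : golfW h x b a Gam q.+1 i = golfW h x b a Gam q i -
     \sum_j PT (h i) (x i) (Aadj (Gam q.+1) (b i) (a i) (Aop (Gam q.+1) (b j) (a j)
        (Smat (Gam q.+1) (b j) *m golfW h x b a Gam q j))).
    by rewrite /golfW /= PTD opprD addrA Aadj_sum PT_sum.
  rewrite step (bigD1 i) //=.
  set W := golfW h x b a Gam q i.
  set X := PT (h i) (x i) _.
  set S := \sum_(j | j != i) _.
  have -> : W - (X + S) = - ((X - W) + S).
    exact: oppr_aux.
  rewrite fnormN; apply: (le_trans (@fnormD _ _ _ _ _)).
  have b1 : fnorm (X - W) <= 1 / 4 * fnorm W.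
    have := Hii i q.+1 Hp W; rewrite /= !PTW; exact.
  have b2 : fnorm S <= \sum_(j | j != i) 1 / (4 * r%:R) * fnorm (golfW h x b a Gam q j).
    apply: (le_trans (@fnorm_sum _ _ _ _ _ _)); apply: ler_sum => j ji.
    have ij : i != j by rewrite eq_sym.
    have := Hjk i j q.+1 ij Hp (golfW h x b a Gam q j).
    rewrite /= !PTW; exact.
  have r0 : (0 < r)%N by exact: (leq_ltn_trans (leq0n i) (ltn_ord i)).
  have rR : 0 < r%:R :> R by rewrite ltr0n.
  set t := 2%:R ^- q : R.
  have t0 : 0 <= t by rewrite /t invr_ge0 exprn_ge0.
  have b3 : \sum_(j | j != i) 1 / (4 * r%:R) * fnorm (golfW h x b a Gam q j) <= t / 4.
    apply: (le_trans (y := \sum_(j | j != i) 1 / (4 * r%:R) * t)).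
      apply: ler_sum => j _; apply: ler_wpM2l; last exact: IH'.
      by rewrite divr_ge0 // mulr_ge0.
    have c0 : 0 <= 1 / (4 * r%:R) * t by rewrite mulr_ge0 // divr_ge0 // mulr_ge0.
    apply: (le_trans (y := \sum_(j < r) 1 / (4 * r%:R) * t)).
      rewrite [X in _ <= X](bigD1 i) //=; exact: ler_wpDl c0 (le_refl _).
    rewrite sum_const_ord -mulr_natl.
    rewrite le_eqVlt; apply/orP; left; apply/eqP; field.
    by rewrite gt_eqF.
  have b4 : 1 / 4 * fnorm W <= 1 / 4 * t by rewrite ler_wpM2l // IH'.
  have -> : 2%:R ^- q.+1 = t / 2 :> R by rewrite /t exprS invfM mulrC.
  lra.
split; first by move=> i p /andP [_ Hp]; exact: main.
move=> Hln i.
rewrite -opprB fnormN; apply: (le_trans (main P (leqnn P) i)).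
have r0 : (0 < r)%N by exact: (leq_ltn_trans (leq0n i) (ltn_ord i)).
have rR : 0 < r%:R :> R by rewrite ltr0n.
set c := 5 * r%:R * gamma.
have cpos : 0 < c by rewrite /c !mulr_gt0.
have l2 : 0 < ln (2 : R) by apply: ln_gt0; lra.
rewrite ler_pdivrMr // in Hln.
have e : P%:R * ln (2 : R) = ln (2 ^+ P) by rewrite lnXn // mulr_natl.
rewrite e ler_ln ?posrE ?exprn_gt0 // in Hln.
by rewrite mul1r lef_pV2 ?posrE ?exprn_gt0.
Qed.
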